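(* Let \(D\) be a bornological \(V\)-algebra and let \(D'\) be \(D\) with the compactoid bornology. Then \(D'\) is again a bornological \(V\)-algebra. If \(D\) is semidagger, then so is \(D'\).
   Context: Let \(V\) be a complete discrete valuation ring with uniformiser \(\pi\). A bornology on a set is a collection of subsets (called bounded) containing all finite subsets and closed under finite unions and under taking subsets. A bornological \(V\)-module is a \(V\)-module with a bornology such that every bounded subset is contained in a bounded \(V\)-submodule. A bornological \(V\)-algebra is a \(V\)-algebra with such a bornology for which multiplication is bounded (if \(S,T\) are bounded then so is \(S\cdot T\)). It is semidagger if for every bounded subset \(S\subseteq D\), the \(V\)-submodule \(\sum_{i=0}^\infty \pi^i S^{i+1}\) (generated by all products \(\pi^i s_0\cdots s_i\) with \(s_j\in S\)) is bounded. A subset \(S\subseteq D\) is compactoid if there is a bounded \(V\)-submodule \(T\subseteq D\) with \(S\subseteq T\) such that for every \(n\in\mathbb N\) there is a finite set \(F_n\subseteq T\) with \(S\subseteq VF_n+\pi^nT\); the compactoid bornology consists of the compactoid subsets. *)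

(* Defs.v *)
From HB Require Import structures.
From mathcomp Require Import all_boot all_order all_algebra.
From mathcomp Require Import boolp classical_sets.
Set Implicit Arguments. Unset Strict Implicit. Unset Printing Implicit Defensive.
Import Order.TTheory GRing.Theory Num.Theory.
Local Open Scope ring_scope.
Local Open Scope classical_set_scope.

Definition is_dvr_uniformiser (V : idomainType) (pi : V) : Prop :=
  [/\ pi != 0, pi \isn't a GRing.unit &
      forall x : V, x != 0 -> exists (u : V) (n : nat), u \is a GRing.unit /\ x = u * pi ^+ n].

Definition pi_div (V : idomainType) (pi : V) (n : nat) (x : V) : Prop :=
  exists y : V, x = pi ^+ n * y.

(* pi-adic completeness: every pi-adic Cauchy sequence converges. *)
Definition pi_complete (V : idomainType) (pi : V) : Prop :=
  forall a : nat -> V, (forall n, pi_div pi n (a n.+1 - a n)) ->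
    exists l : V, forall n, pi_div pi n (l - a n).

Definition complete_dvr (V : idomainType) (pi : V) : Prop :=
  is_dvr_uniformiser pi /\ pi_complete pi.

Section Born.
Variables (V : idomainType) (D : algType V).

Definition submodule (M : set D) : Prop :=
  [/\ M 0, (forall x y, M x -> M y -> M (x + y)) &
      (forall (a : V) x, M x -> M (a *: x))].

Definition span (G : set D) : set D :=
  [set x | forall M, submodule M -> G `<=` M -> M x].

Definition bornology (B : set (set D)) : Prop :=
  [/\ (forall s : seq D, B [set x | x \in s]),
      (forall S T, B S -> B T -> B (S `|` T)) &
      (forall S T, B T -> S `<=` T -> B S)].

Definition born_module (B : set (set D)) : Prop :=
  bornology B /\
  forall S, B S -> exists T, [/\ B T, submodule T & S `<=` T].

Definition setmul (S T : set D) : set D :=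
  [set x | exists s t, [/\ S s, T t & x = s * t]].

Definition born_algebra (B : set (set D)) : Prop :=
  born_module B /\ forall S T, B S -> B T -> B (setmul S T).

Definition dagger_gens (pi : V) (S : set D) : set D :=
  [set x | exists (i : nat) (f : 'I_i.+1 -> D),
     (forall j, S (f j)) /\ x = pi ^+ i *: \prod_(j < i.+1) f j].

Definition semidagger (pi : V) (B : set (set D)) : Prop :=
  forall S, B S -> B (span (dagger_gens pi S)).

Definition compactoid (pi : V) (B : set (set D)) (S : set D) : Prop :=
  exists T, [/\ B T, submodule T, S `<=` T &
    forall n : nat, exists F : seq D,
      (forall x, x \in F -> T x) /\
      S `<=` [set z | exists a t, [/\ span [set x | x \in F] a, T t &
                                     z = a + pi ^+ n *: t]]].

Definition compactoid_bornology (pi : V) (B : set (set D)) : set (set D) :=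
  [set S | compactoid pi B S].

End Born.

(* Main.v *)
Require Import Defs.
From mathcomp Require Import all_boot all_order all_algebra.
From mathcomp Require Import boolp classical_sets.
From mathcomp Require Import zify.
Set Implicit Arguments. Unset Strict Implicit. Unset Printing Implicit Defensive.
Import Order.TTheory GRing.Theory Num.Theory.
Local Open Scope ring_scope.
Local Open Scope classical_set_scope.

Section Aux.
Variables (V : idomainType) (D : algType V).
Implicit Types (X Y M T : set D).

Lemma span_sub X : submodule (Defs.span X).
Proof.
split.
- by move=> M [].
- move=> x y hx hy M hM hXM; case: (hM) => _ hD _; exact: hD (hx M hM hXM) (hy M hM hXM).
- move=> a x hx M hM hXM; case: (hM) => _ _ hZ; exact: hZ (hx M hM hXM).
Qed.

Lemma span_incl X : X `<=` Defs.span X.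
Proof. by move=> x hx M _ h; apply: h. Qed.

Lemma span_min X M : submodule M -> X `<=` M -> Defs.span X `<=` M.
Proof. by move=> hM hXM x hx; apply: hx. Qed.

Lemma span_mono X Y : X `<=` Y -> Defs.span X `<=` Defs.span Y.
Proof. move=> h; apply: span_min; first exact: span_sub. by move=> x /h /span_incl. Qed.

Lemma span0 X : Defs.span X 0.
Proof. by case: (span_sub X). Qed.
Lemma spanD X x y : Defs.span X x -> Defs.span X y -> Defs.span X (x + y).
Proof. by case: (span_sub X) => _ h _; apply: h. Qed.
Lemma spanZ X (a : V) x : Defs.span X x -> Defs.span X (a *: x).
Proof. by case: (span_sub X) => _ _ h; apply: h. Qed.

Lemma sub_scale M (c : V) : submodule M -> submodule [set r | M (c *: r)].
Proof.
case=> h0 hD hZ; split => /=.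
- by rewrite scaler0.
- by move=> x y hx hy; rewrite scalerDr; exact: hD.
- by move=> a x hx; rewrite scalerA mulrC -scalerA; exact: hZ.
Qed.

Lemma span_mul X Y a b : Defs.span X a -> Defs.span Y b -> Defs.span (setmul X Y) (a * b).
Proof.
move=> ha; move: b.
have : Defs.span X `<=` [set a | forall b, Defs.span Y b -> Defs.span (setmul X Y) (a * b)].
  apply: span_min.
  - split => /=.
    + by move=> b _; rewrite mul0r; exact: span0.
    + by move=> x y hx hy b hb; rewrite mulrDl; apply: spanD; [exact: hx|exact: hy].
    + by move=> c x hx b hb; rewrite -scalerAl; apply: spanZ; exact: hx.
  - move=> x hx /=; apply: span_min.
    + split => /=.
      * by rewrite mulr0; exact: span0.
      * by move=> y z hy hz; rewrite mulrDr; exact: spanD.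
      * by move=> c y hy; rewrite -scalerAr; exact: spanZ.
    + by move=> y hy; apply: span_incl; exists x, y.
by move=> h; apply: h.
Qed.

Lemma approx_sub (F : set D) T (c : V) : submodule T ->
  submodule [set z | exists a t, [/\ Defs.span F a, T t & z = a + c *: t]].
Proof.
case=> h0 hD hZ; split => /=.
- by exists 0, 0; split => //; [exact: span0 | rewrite scaler0 addr0].
- move=> x y [a [t [ha ht ->]]] [a' [t' [ha' ht' ->]]].
  exists (a + a'), (t + t'); split; [exact: spanD | exact: hD |].
  by rewrite scalerDr addrACA.
- move=> b x [a [t [ha ht ->]]]; exists (b *: a), (b *: t); split;
    [exact: spanZ | exact: hZ |].
  by rewrite scalerDr !scalerA mulrC.
Qed.

Fixpoint PS X (m : nat) : set D :=
  match m with 0 => [set 1] | m.+1 => setmul X (PS X m) end.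

Lemma PS_mono X Y m : X `<=` Y -> PS X m `<=` PS Y m.
Proof.
move=> h; elim: m => [|m IH] //= y [s [z [hs hz ->]]].
by exists s, z; split => //; [exact: h | exact: IH].
Qed.

Lemma PS_prod X m (f : 'I_m -> D) : (forall j, X (f j)) -> PS X m (\prod_(j < m) f j).
Proof.
elim: m f => [|m IH] f hf /=; first by rewrite big_ord0.
rewrite big_ord_recl; exists (f ord0), (\prod_(j < m) f (lift ord0 j)); split => //.
by apply: IH => j; exact: hf.
Qed.

Lemma PS_fun X m y : PS X m y ->
  exists f : 'I_m -> D, (forall j, X (f j)) /\ y = \prod_(j < m) f j.
Proof.
elim: m y => [|m IH] y /=.
  by move=> ->; exists (fun _ => 0); split; [case | rewrite big_ord0].
move=> [s [z [hs hz ->]]]; case: (IH z hz) => f [hf ->].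
exists (fun j => if unlift ord0 j is Some k then f k else s); split.
  by move=> j /=; case: (unlift ord0 j).
rewrite big_ord_recl unlift_none; congr (_ * _).
by apply: eq_bigr => j _; rewrite liftK.
Qed.


Lemma PS_pair T : forall k m y, (m <= k)%N -> (0 < m)%N -> PS T m y ->
  exists g, [/\ (0 < g)%N, (2 * g <= m + 1)%N & PS (T `|` setmul T T) g y].
Proof.
elim=> [|k IH] m y hmk hm; first by move: hmk hm; case: m.
case: m hmk hm => [|[|m]] hmk hm //=.
  move=> [s [z [hs -> ->]]]; exists 1%N; split => //=.
  by exists s, 1; split => //; left.
move=> [x1 [z1 [h1 [x2 [z [h2 hz ->]]] ->]]].
case: m hmk hm hz => [|m] hmk hm hz.
  move: hz => /= ->; exists 1%N; split => //=.
  exists (x1 * x2), 1; split => //; first by right; exists x1, x2.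
  by rewrite mulrA.
have [|//|g [hg hg2 hgz]] := IH m.+1 z _ _ hz; first by lia.
exists g.+1; split => //; first by lia.
by exists (x1 * x2), z; split => //; [right; exists x1, x2 | rewrite mulrA].
Qed.

Lemma W_of_PS (pi : V) T e m y : (0 < m)%N -> (m <= 2 * e + 2)%N -> PS T m y ->
  Defs.span (dagger_gens pi (T `|` setmul T T)) (pi ^+ e *: y).
Proof.
move=> hm hme hy.
have [g [hg hg2 hgy]] := PS_pair (leqnn m) hm hy.
case: g hg hg2 hgy => [|k] // _ hk hky.
have [f [hf ->]] := PS_fun hky.
have -> : pi ^+ e *: \prod_(j < k.+1) f j = pi ^+ (e - k) *: (pi ^+ k *: \prod_(j < k.+1) f j).
  by rewrite scalerA -exprD subnK //; lia.
apply: spanZ; apply: span_incl; exists k, f; split => //.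
Qed.

Fixpoint PSl (F : seq D) m : seq D :=
  match m with 0 => [:: 1] | m.+1 => [seq x * y | x <- F, y <- PSl F m] end.

Lemma PS_PSl F m y : PS [set x | x \in F] m y -> y \in PSl F m.
Proof.
elim: m y => [|m IH] y /=; first by move=> ->; rewrite mem_seq1.
by move=> [s [z [hs hz ->]]]; apply: allpairs_f => //; exact: IH.
Qed.

Lemma PSl_PS F m y : y \in PSl F m -> PS [set x | x \in F] m y.
Proof.
elim: m y => [|m IH] y /=; first by rewrite mem_seq1 => /eqP.
by move/allpairsP => [[x z] [hx hz ->]]; exists x, z; split => //; exact: IH.
Qed.

Fixpoint Fl (pi : V) (F : seq D) k : seq D :=
  match k with 0 => [::] | k.+1 => Fl pi F k ++ [seq pi ^+ k *: y | y <- PSl F k.+1] end.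

Lemma Fl_mem pi F k i y : (i < k)%N -> y \in PSl F i.+1 -> pi ^+ i *: y \in Fl pi F k.
Proof.
elim: k => [|k IH] //; rewrite ltnS leq_eqVlt => /orP [/eqP -> | hi] hy /=;
  rewrite mem_cat; apply/orP; [right; exact: map_f | left; exact: IH].
Qed.

Lemma Fl_W pi T F k x : (forall z, z \in F -> T z) -> x \in Fl pi F k ->
  Defs.span (dagger_gens pi (T `|` setmul T T)) x.
Proof.
move=> hF; elim: k => [|k IH] //=; rewrite mem_cat => /orP [/IH //|/mapP [y hy ->]].
apply: (@W_of_PS pi T k k.+1) => //; first by lia.
by apply: (PS_mono hF); exact: PSl_PS.
Qed.


Lemma expand (pi : V) (n : nat) T (F : seq D) S : submodule T ->
  (forall z, z \in F -> T z) ->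
  S `<=` [set z | exists a t, [/\ Defs.span [set x | x \in F] a, T t & z = a + pi ^+ n *: t]] ->
  S `<=` T ->
  forall m y, PS S m y -> exists P r, [/\ Defs.span (PS [set x | x \in F] m) P,
     Defs.span (PS T m) r & y = P + pi ^+ n *: r].
Proof.
move=> hT hF hS hST; elim=> [|m IH] y /=.
  move=> ->; exists 1, 0; split; [exact: span_incl | exact: span0 | by rewrite scaler0 addr0].
move=> [s [z [hs hz ->]]].
have hzT : Defs.span (PS T m) z.
  by apply: span_incl; apply: (PS_mono hST); exact: hz.
have [P [r [hP hr hzE]]] := IH z hz.
rewrite hzE in hzT *.
have [a [t [ha ht ->]]] := hS s hs.
have hFT : [set x | x \in F] `<=` T by move=> x; exact: hF.
exists (a * P), (t * (P + pi ^+ n *: r) + a * r); split.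
- exact: span_mul.
- apply: spanD; apply: span_mul => //; first exact: span_incl.
  by apply: (span_mono hFT).
- rewrite mulrDl -scalerAl mulrDr -scalerAr scalerDr mulrDr -scalerAr.
  by rewrite -!addrA; congr (_ + _); rewrite addrC.
Qed.

End Aux.

Theorem lemma4p7 (V : idomainType) (pi : V) (hV : complete_dvr pi)
  (D : algType V) (B : set (set D)) (hB : born_algebra B) :
  born_algebra (compactoid_bornology pi B) /\
  (semidagger pi B -> semidagger pi (compactoid_bornology pi B)).
Proof.
case: hB => [[[hfin hU hsub] hmod] hmul].
have cbor : bornology (compactoid_bornology pi B).
  split.
  - move=> s; have [T [hT hTs hsT]] := hmod _ (hfin s).
    exists T; split => // n; exists s; split; first by move=> x hx; exact: hsT.
    move=> z hz; exists z, 0; split; first exact: span_incl.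
    + by case: hTs.
    + by rewrite scaler0 addr0.
  - move=> S1 S2 [T1 [hT1 sT1 hS1 a1]] [T2 [hT2 sT2 hS2 a2]].
    have [T [hT sT hTT]] := hmod _ (hU _ _ hT1 hT2).
    exists T; split => //.
      by move=> x [/hS1 h|/hS2 h]; apply: hTT; [left|right].
    move=> n; case: (a1 n) => F1 [hF1 c1]; case: (a2 n) => F2 [hF2 c2].
    exists (F1 ++ F2); split.
      by move=> x; rewrite mem_cat => /orP [/hF1 h|/hF2 h]; apply: hTT; [left|right].
    move=> z [/c1|/c2] [a [t [ha ht ->]]]; exists a, t; split => //.
    + by apply: (span_mono _ ha) => x /= hx; rewrite mem_cat hx.
    + by apply: hTT; left.
    + by apply: (span_mono _ ha) => x /= hx; rewrite mem_cat hx orbT.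
    + by apply: hTT; right.
  - move=> S1 S2 [T [hT sT hS a]] h12; exists T; split => //.
      by move=> x /h12 /hS.
    move=> n; case: (a n) => F [hF c]; exists F; split => // z /h12 /c //.
have cmod : born_module (compactoid_bornology pi B).
  split => // S [T [hT sT hS a]]; exists (Defs.span S); split.
  - exists T; split => //; first exact: span_min.
    move=> n; case: (a n) => F [hF c]; exists F; split => //.
    apply: span_min => //; exact: approx_sub.
  - exact: span_sub.
  - exact: span_incl.
split.
  split => // S1 S2 [T1 [hT1 sT1 hS1 a1]] [T2 [hT2 sT2 hS2 a2]].
  have [T [hT sT hTT]] := hmod _ (hmul _ _ hT1 hT2).
  case: (sT) => h0 hD hZ.
  exists T; split => //.
    by move=> _ [s1 [s2 [h1 h2 ->]]]; apply: hTT; exists s1, s2; split; auto.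
  move=> n; case: (a1 n) => F1 [hF1 c1]; case: (a2 n) => F2 [hF2 c2].
  exists [seq x * y | x <- F1, y <- F2]; split.
    move=> z /allpairsP [[x y] [hx hy ->]]; apply: hTT; exists x, y; split => //.
    + exact: hF1.
    + exact: hF2.
  move=> _ [s1 [s2 [h1 h2 ->]]].
  have [a [t [ha ht hs1]]] := c1 _ h1.
  have [b [u [hb hu hs2]]] := c2 _ h2.
  have haT : T1 a by apply: (span_min sT1 _ ha) => x; exact: hF1.
  exists (a * b), (a * u + t * s2); split.
  - apply: (span_mono _ (span_mul ha hb)) => _ [x [y [hx hy ->]]] /=.
    exact: allpairs_f.
  - apply: hD; apply: hTT.
    + by exists a, u; split.
    + by exists t, s2; split => //; exact: hS2.
  - rewrite hs1 {1}hs2 mulrDl mulrDr -scalerAl -scalerAr scalerDr.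
    by rewrite -hs2 addrA.
move=> hdag S [T [hT sT hS a]].
pose U := T `|` setmul T T.
pose W := Defs.span (dagger_gens pi U).
have hW : B W by apply: hdag; apply: hU => //; exact: hmul.
exists W; split => //.
- exact: span_sub.
- apply: span_mono => _ [i [f [hf ->]]]; exists i, f; split => // j.
  by left; apply: hS.
move=> n; case: (a n) => F [hF c].
exists (Fl pi F (2 * n)); split.
  by move=> x hx; apply: (Fl_W hF hx).
apply: span_min; first by apply: approx_sub; exact: span_sub.
move=> _ [i [f [hf ->]]].
have hy : PS S i.+1 (\prod_(j < i.+1) f j) by apply: PS_prod.
case: (leqP (2 * n) i.+1) => hin.
  exists 0, (pi ^+ (i - n) *: \prod_(j < i.+1) f j); split.
  - exact: span0.
  - apply: (@W_of_PS _ _ pi T (i - n) i.+1) => //; first by lia.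
    exact: (PS_mono hS).
  - by rewrite add0r scalerA -exprD subnKC //; lia.
have [P [r [hP hr ->]]] := expand sT hF c hS hy.
exists (pi ^+ i *: P), (pi ^+ i *: r); split.
- move: P hP; apply: span_min; first exact: sub_scale (span_sub _).
  move=> y hy'; apply: span_incl; apply: Fl_mem; [lia | exact: PS_PSl].
- move: r hr; apply: span_min; first exact: sub_scale (span_sub _).
  move=> y hy'; apply: (@W_of_PS _ _ pi T i i.+1) => //; lia.
- by rewrite scalerDr !scalerA mulrC.
Qed.
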